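(* Let $n\ge 3$ and let $S_n$ be a complete sun graph on $2n$ vertices. Then the sparing number of $S_n$ is $\varphi(S_n)=\frac{1}{2}(n^2-3n+6)$.
   Context: An $n$-sun ($n\ge3$) is a graph on $2n$ vertices whose vertex set is partitioned into $U=\{u_1,\dots,u_n\}$ and $W=\{w_1,\dots,w_n\}$, where $W$ is an independent set and $w_j$ is adjacent to $u_i$ if and only if $j=i$ or $j\equiv i+1 \pmod n$. A complete sun is an $n$-sun in which the induced subgraph on $U$ is complete. Let $\mathbb{N}_0$ be the set of non-negative integers; for $A,B\subseteq\mathbb{N}_0$, $A+B=\{a+b:a\in A,b\in B\}$. An integer additive set-indexer (IASI) of a graph $G$ is an injective map $f:V(G)\to\mathcal{P}(\mathbb{N}_0)$ such that $f^+:E(G)\to\mathcal{P}(\mathbb{N}_0)$, $f^+(uv)=f(u)+f(v)$, is injective. A weak IASI is an IASI with $|f^+(uv)|=\max(|f(u)|,|f(v)|)$ for every edge $uv$. An edge $e$ is mono-indexed if $|f^+(e)|=1$. The sparing number $\varphi(G)$ is the minimum number of mono-indexed edges over all weak IASIs of $G$. *)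

(* Defs.v *)
From mathcomp Require Import all_boot.
From mathcomp Require Import finmap.
Set Implicit Arguments. Unset Strict Implicit. Unset Printing Implicit Defensive.
Local Open Scope fset_scope.

(* Vertex set of the n-sun: inl i = u_i, inr j = w_j (0-based indices). *)
Definition sun_vertex (n : nat) : finType := ('I_n + 'I_n)%type.

Definition uw_adj (n : nat) (i j : 'I_n) : bool :=
  (nat_of_ord j == nat_of_ord i) || (nat_of_ord j == (nat_of_ord i).+1 %% n).

Definition complete_sun_adj (n : nat) : rel (sun_vertex n) :=
  fun x y =>
    match x, y with
    | inl i, inl j => i != j
    | inl i, inr j => uw_adj i j
    | inr j, inl i => uw_adj i j
    | inr _, inr _ => false
    end.

Definition sumset (A B : {fset nat}) : {fset nat} :=
  [fset addn a b | a in A, b in B].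

Definition weak_IASI (V : finType) (adj : rel V) (f : V -> {fset nat}) : Prop :=
  [/\ forall x, f x != fset0,
      injective f,
      (forall x y x' y', adj x y -> adj x' y' ->
          sumset (f x) (f y) = sumset (f x') (f y') -> [set x; y] = [set x'; y']) &
      (forall x y, adj x y ->
          #|` sumset (f x) (f y)| = maxn #|` f x| #|` f y|)].

Definition mono_edges (V : finType) (adj : rel V) (f : V -> {fset nat}) : nat :=
  #|[set e : {set V} | [exists x, exists y,
       [&& e == [set x; y], adj x y & #|` sumset (f x) (f y)| == 1]]]|.

Definition sparing_number_is (V : finType) (adj : rel V) (k : nat) : Prop :=
  (exists f, weak_IASI adj f /\ mono_edges adj f = k) /\
  (forall f, weak_IASI adj f -> k <= mono_edges adj f).

(* Main.v *)
Require Import Defs.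
From mathcomp Require Import all_boot.
From mathcomp Require Import finmap.
Set Implicit Arguments. Unset Strict Implicit. Unset Printing Implicit Defensive.
Local Open Scope fset_scope.
Lemma in_sumset (A B : {fset nat}) m :
  reflect (exists2 a, a \in A & exists2 b, b \in B & m = (a + b)%N) (m \in sumset A B).
Proof. exact: imfset2P. Qed.
Lemma sumset1l a (B : {fset nat}) : #|` sumset [fset a] B| = #|` B|.
Proof.
have -> : sumset [fset a] B = [fset (a + b)%N | b in B].
  apply/fsetP => m; apply/in_sumset/imfsetP.
  - by move=> [x]; rewrite in_fset1 => /eqP -> [b bB ->]; exists b.
  - by move=> [b /= bB ->]; exists a; rewrite ?in_fset1 //; exists b.
rewrite card_imfset //=; last exact: addnI.
Qed.
Lemma sumsetC (A B : {fset nat}) : sumset A B = sumset B A.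
Proof.
apply/fsetP => m; apply/in_sumset/in_sumset => -[x xA [y yB ->]];
  by exists y => //; exists x => //; rewrite addnC.
Qed.
Lemma sumset1r b (A : {fset nat}) : #|` sumset A [fset b]| = #|` A|.
Proof. by rewrite sumsetC sumset1l. Qed.
Lemma seq_max (s : seq nat) : s != [::] -> exists2 m, m \in s & forall x, x \in s -> x <= m.
Proof.
elim: s => // a [|b s] IH _.
  by exists a; rewrite ?inE // => x; rewrite inE => /eqP ->.
have [m ms mmax] := IH isT.
case: (leqP a m) => am.
  exists m; first by rewrite inE ms orbT.
  by move=> x; rewrite inE => /orP [/eqP -> //| /mmax].
exists a; first by rewrite inE eqxx.
move=> x; rewrite inE => /orP [/eqP -> //| /mmax xm].
by apply: leq_trans xm (ltnW am).
Qed.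
Lemma fset_max (B : {fset nat}) : B != fset0 -> exists2 m, m \in B & forall x, x \in B -> x <= m.
Proof.
move=> /fset0Pn [y yB]; apply: seq_max.
by case: B yB => [[|? ?] ?].
Qed.
Lemma sumset_gt (A B : {fset nat}) : 2 <= #|`A| -> 2 <= #|`B| -> #|`A| < #|` sumset A B|.
Proof.
move=> hA hB.
have [bm bmB bmax] : exists2 m, m \in B & forall x, x \in B -> x <= m.
  by apply: fset_max; rewrite -cardfs_gt0; apply: leq_trans hB.
have [am amA amax] : exists2 m, m \in A & forall x, x \in A -> x <= m.
  by apply: fset_max; rewrite -cardfs_gt0; apply: leq_trans hA.
have [b' b'B b'n] : exists2 x, x \in B & x \notin [fset bm].
  apply/fsubsetPn; apply/negP => sub.
  by move: (fsubset_leq_card sub); rewrite cardfs1 leqNgt hB.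
have b'lt : b' < bm.
  by rewrite ltn_neqAle bmax // andbT; rewrite in_fset1 in b'n.
set S := [fset (a + b')%N | a in A].
have cS : #|` S| = #|` A| by rewrite card_imfset //=; apply: addIn.
have nin : (am + bm)%N \notin S.
  apply/negP => /imfsetP [a /= aA /eqP]; rewrite eqn_leq => /andP [h _].
  by have := leq_add (amax a aA) b'lt; rewrite addnS => /leq_trans/(_ h); rewrite ltnn.
have sub : (am + bm)%N |` S `<=` sumset A B.
  apply/fsubsetP => x; rewrite in_fset1U => /orP [/eqP ->|].
    by apply/in_sumset; exists am => //; exists bm.
  by move=> /imfsetP [a /= aA ->]; apply/in_sumset; exists a => //; exists b'.
by move: (fsubset_leq_card sub); rewrite cardfsU1 nin cS.
Qed.
Section Gen.
Variables (V : finType) (adj : rel V) (f : V -> {fset nat}).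
Hypothesis hf : weak_IASI adj f.
Lemma card_pos x : 0 < #|` f x|.
Proof. by case: hf => h _ _ _; rewrite cardfs_gt0. Qed.
Lemma indep x y : adj x y -> (#|` f x| == 1) || (#|` f y| == 1).
Proof.
move=> a; case: hf => _ _ _ /(_ x y a) hc.
have px := card_pos x; have py := card_pos y.
case: (ltngtP #|` f x| 1) => //; first by rewrite ltnS leqNgt px.
case: (ltngtP #|` f y| 1) => //; first by rewrite ltnS leqNgt py.
move=> gy gx.
have h1 := sumset_gt gx gy; have h2 := sumset_gt gy gx.
rewrite sumsetC in h2.
by move: h1 h2; rewrite hc; case: (leqP #|` f x| #|` f y|) => _; rewrite ltnn // andbF.
Qed.
Definition monoset := [set e : {set V} | [exists x, exists y,
       [&& e == [set x; y], adj x y & #|` sumset (f x) (f y)| == 1]]].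
Lemma mono_mem x y : adj x y -> #|` f x| == 1 -> #|` f y| == 1 -> [set x; y] \in monoset.
Proof.
move=> a /eqP cx /eqP cy; rewrite inE; apply/existsP; exists x; apply/existsP; exists y.
by rewrite eqxx a; case: hf => _ _ _ /(_ x y a) ->; rewrite cx cy.
Qed.
Lemma mono_inv e : e \in monoset -> exists x y, [/\ e = [set x; y], adj x y,
   #|` f x| = 1 & #|` f y| = 1].
Proof.
rewrite inE => /existsP [x /existsP [y /and3P [/eqP -> a c]]].
exists x, y; split => //; case: hf => _ _ _ /(_ x y a) hc; rewrite hc in c;
 have px := card_pos x; have py := card_pos y; move: c;
 case: (leqP #|` f x| #|` f y|) => h /eqP e1; rewrite e1 in h *; apply/eqP;
 rewrite eqn_leq ?h //=; by [rewrite ltnW | ].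
Qed.
End Gen.
Lemma ordS_neq n (i : 'I_n.+2) : ordS i != i.
Proof.
apply/eqP => /(congr1 val) /=.
have hi := ltn_ord i.
case: (ltngtP i.+1 n.+2) => [lt|gt|e].
- by rewrite modn_small // => /eqP; rewrite (gtn_eqF (ltnSn i)).
- by move: gt; rewrite ltnS leqNgt hi.
- by rewrite e modnn => h; move: e; rewrite -h.
Qed.

Lemma lower m (f : sun_vertex m.+3 -> {fset nat}) :
  weak_IASI (@complete_sun_adj m.+3) f ->
  'C(m.+2, 2) + 2 <= #|monoset (@complete_sun_adj m.+3) f|.
Proof.
move=> hf.
set adj := @complete_sun_adj m.+3.
set M := monoset adj f.
have Dsub : forall T0 : {set sun_vertex m.+3},
    (forall v, v \in T0 -> exists i, v = inl i) ->
    (forall v, v \in T0 -> #|` f v| == 1) ->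
    [set B : {set sun_vertex m.+3} | B \subset T0 & #|B| == 2] \subset M.
  move=> T1 hT hc; apply/subsetP => B; rewrite inE => /andP [sB /cards2P [x [y [xy eB]]]].
  have xT : x \in T1 by apply: (subsetP sB); rewrite eB !inE eqxx.
  have yT : y \in T1 by apply: (subsetP sB); rewrite eB !inE eqxx orbT.
  rewrite eB; apply: mono_mem => //; [|exact: hc|exact: hc].
  have [i ei] := hT x xT; have [j ej] := hT y yT.
  by move: xy; rewrite ei ej /adj /= => /eqP ne; apply/eqP => e; apply: ne; rewrite e.
case: (boolP [exists i : 'I_m.+3, #|` f (inl i)| != 1]) => [/existsP [i ci]|/existsPn ci].
- set T0 := inl @: [set~ i] : {set sun_vertex m.+3}.
  have hT : forall v, v \in T0 -> exists j, v = inl j.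
    by move=> v /imsetP [j _ ->]; exists j.
  have hc : forall v, v \in T0 -> #|` f v| == 1.
    move=> v /imsetP [j]; rewrite !inE => ji ->.
    by have := indep hf (_ : adj (inl i) (inl j)); rewrite (negbTE ci); apply; rewrite /adj /= eq_sym.
  have cT0 : #|T0| = m.+2 by rewrite card_imset; [rewrite cardsC1 card_ord | exact: inl_inj].
  set D := [set B : {set sun_vertex m.+3} | B \subset T0 & #|B| == 2].
  have cD : #|D| = 'C(m.+2, 2) by rewrite cards_draws cT0.
  set p := ord_pred i.
  have ep : ordS p = i by rewrite /p ord_predK.
  have pi : p != i by apply/eqP => e; move: (ordS_neq p); rewrite ep e eqxx.
  set E1 : {set sun_vertex m.+3} := [set inr i; inl p].
  set E2 : {set sun_vertex m.+3} := [set inr (ordS i); inl (ordS i)].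
  have E1M : E1 \in M.
    apply: mono_mem => //.
    - by rewrite /adj /= /uw_adj; apply/orP; right; apply/eqP; rewrite -[in LHS]ep.
    - by have := indep hf (_ : adj (inl i) (inr i)); rewrite (negbTE ci); apply; rewrite /adj /= /uw_adj eqxx.
    - by apply: hc; rewrite /T0 imset_f // !inE.
  have E2M : E2 \in M.
    apply: mono_mem => //.
    - by rewrite /adj /= /uw_adj eqxx.
    - by have := indep hf (_ : adj (inl i) (inr (ordS i))); rewrite (negbTE ci); apply; rewrite /adj /= /uw_adj /= eqxx orbT.
    - by apply: hc; rewrite /T0 imset_f // !inE ordS_neq.
  have nD : forall j, ~ (inr j \in T0) by move=> j /imsetP [? _].
  have E1D : E1 \notin D.
    rewrite inE; apply/negP => /andP [/subsetP s _]; apply: (nD i); apply: s; by rewrite !inE eqxx.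
  have E2D : E2 \notin D.
    rewrite inE; apply/negP => /andP [/subsetP s _]; apply: (nD (ordS i)); apply: s; by rewrite !inE eqxx.
  have E12 : E1 \notin E2 |: D.
    rewrite in_setU1 negb_or E1D andbT; apply/eqP => e.
    have : inr i \in E2 by rewrite -e !inE eqxx.
    rewrite !inE /= orbF => /eqP [] e'; move: (ordS_neq i); by rewrite -e' eqxx.
  have sub : E1 |: (E2 |: D) \subset M.
    by rewrite !subUset !sub1set E1M E2M Dsub.
  move: (subset_leq_card sub); rewrite cardsU1 E12 cardsU1 E2D cD.
  by rewrite addn2 /= !add1n.
- set T0 := inl @: [set: 'I_m.+3] : {set sun_vertex m.+3}.
  have hT : forall v, v \in T0 -> exists j, v = inl j.
    by move=> v /imsetP [j _ ->]; exists j.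
  have hc : forall v, v \in T0 -> #|` f v| == 1.
    by move=> v /imsetP [j _ ->]; have := ci j; rewrite negbK.
  have cT0 : #|T0| = m.+3 by rewrite card_imset; [rewrite cardsT card_ord | exact: inl_inj].
  move: (subset_leq_card (Dsub T0 hT hc)); rewrite cards_draws cT0 binS bin1.
  by apply: leq_trans; rewrite leq_add2l.
Qed.
From mathcomp Require Import zify.
Lemma pow2_core a b c d : a < b -> c < d -> (2^a + 2^b = 2^c + 2^d)%N -> a = c /\ b = d.
Proof.
have br : forall a b, a < b -> (2^b <= 2^a + 2^b < 2^b.+1)%N.
  move=> x y xy; rewrite leq_addl /= expnS mul2n -addnn ltn_add2r.
  by rewrite ltn_exp2l.
move=> ab cd e.
have bd : b = d.
  have [h1 h2] := andP (br _ _ ab); have [h3 h4] := andP (br _ _ cd).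
  rewrite e in h1 h2.
  case: (ltngtP b d) => // h.
  - have : (2^b.+1 <= 2^d)%N by rewrite leq_exp2l.
    by move=> h5; have := leq_trans h2 h5; rewrite ltnNge h3.
  - have : (2^d.+1 <= 2^b)%N by rewrite leq_exp2l.
    by move=> h5; have := leq_trans h4 h5; rewrite ltnNge h1.
split => //; move: e; rewrite bd => /addIn /eqP; rewrite eqn_exp2l //; exact/eqP.
Qed.
Lemma pow2_pair a b c d : a != b -> c != d -> (2^a + 2^b = 2^c + 2^d)%N ->
  (a = c /\ b = d) \/ (a = d /\ b = c).
Proof.
move=> ab cd e.
case: (ltngtP a b) ab => // h1 _; case: (ltngtP c d) cd => // h2 _.
- by left; apply: pow2_core.
- by right; apply: pow2_core; rewrite // e addnC.
- by right; have [? ?] := pow2_core h1 h2 (etrans (addnC _ _) e).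
- by left; have [? ?] := pow2_core h1 h2 (etrans (addnC _ _) (etrans e (addnC _ _))).
Qed.
Section Constr.
Variable m : nat.
Local Notation n := m.+3.
Local Notation V := (sun_vertex m.+3).
Local Notation adj := (@complete_sun_adj m.+3).
Definition kv (v : V) : nat := match v with inl i => val i | inr j => (n + val j)%N end.
Definition ns (v : V) : bool := (kv v == 0) || (n.+2 <= kv v).
Definition F (v : V) : {fset nat} := if ns v then [fset 0; 2 ^ kv v] else [fset 2 ^ kv v].

Lemma kv_inj : injective kv.
Proof.
move=> [i|i] [j|j] /=.
- by move=> e; congr inl; apply: val_inj.
- by move=> e; have := ltn_ord i; rewrite e ltnNge leq_addr.
- by move=> e; have := ltn_ord j; rewrite -e ltnNge leq_addr.
- by move=> /addnI e; congr inr; apply: val_inj.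
Qed.
Lemma F_top v : 2 ^ kv v \in F v.
Proof. by rewrite /F; case: ns; rewrite !inE eqxx ?orbT. Qed.
Lemma F_le v x : x \in F v -> x <= 2 ^ kv v.
Proof. by rewrite /F; case: ns; rewrite !inE; [case/orP => /eqP -> |move=> /eqP ->]. Qed.
Lemma F_card v : #|` F v| = if ns v then 2 else 1.
Proof. by rewrite /F; case: ns; rewrite ?cardfs2 ?cardfs1 // eq_sym -lt0n expn_gt0. Qed.
Lemma adj_irr x : ~~ adj x x.
Proof. by case: x => i /=; rewrite ?eqxx. Qed.
Lemma ns_indep x y : adj x y -> ~~ (ns x && ns y).
Proof.
have h : forall i j : 'I_n, uw_adj i j -> ns (inl i) -> ~~ ns (inr j).
  move=> i j; rewrite /uw_adj /ns /= => a hi.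
  have i0 : nat_of_ord i = 0 by move: hi (ltn_ord i); lia.
  move: a; rewrite i0 modn_small //; have := ltn_ord j; lia.
case: x => i; case: y => j //=.
- move=> ij; rewrite /ns /=; have := ltn_ord i; have := ltn_ord j.
  move: ij => /eqP ij. have : nat_of_ord i != nat_of_ord j by apply/eqP => e; apply: ij; apply: val_inj.
  lia.
- by move=> a; apply/negP => /andP [h1 h2]; move: (h _ _ a h1); rewrite h2.
- by move=> a; apply/negP => /andP [h1 h2]; move: (h _ _ a h2); rewrite h1.
Qed.
Lemma sum_top x y : (2 ^ kv x + 2 ^ kv y)%N \in sumset (F x) (F y).
Proof. by apply/in_sumset; exists (2 ^ kv x); rewrite ?F_top //; exists (2 ^ kv y); rewrite ?F_top. Qed.
Lemma sum_le x y z : z \in sumset (F x) (F y) -> z <= (2 ^ kv x + 2 ^ kv y)%N.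
Proof. by move=> /in_sumset [a /F_le ha [b /F_le hb ->]]; apply: leq_add. Qed.
Lemma F_single v : ~~ ns v -> F v = [fset 2 ^ kv v].
Proof. by rewrite /F => /negbTE ->. Qed.
Lemma F_weak : weak_IASI adj F.
Proof.
split.
- by move=> x; apply/fset0Pn; exists (2 ^ kv x); apply: F_top.
- move=> x y e; apply: kv_inj; apply/eqP.
  rewrite eqn_leq -[kv x <= _](@leq_exp2l 2) // -[kv y <= _](@leq_exp2l 2) //.
  by apply/andP; split; apply: F_le; [rewrite -e | rewrite e]; exact: F_top.
- move=> x y x' y' a a' e.
  have es : (2 ^ kv x + 2 ^ kv y = 2 ^ kv x' + 2 ^ kv y')%N.
    apply/eqP; rewrite eqn_leq; apply/andP; split; apply: sum_le;
      [rewrite -e | rewrite e]; exact: sum_top.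
  have nxy : kv x != kv y by apply/eqP => /kv_inj h; move: (adj_irr x); rewrite {2}h a.
  have nxy' : kv x' != kv y' by apply/eqP => /kv_inj h; move: (adj_irr x'); rewrite {2}h a'.
  case: (pow2_pair nxy nxy' es) => [[/kv_inj -> /kv_inj ->]|[/kv_inj -> /kv_inj ->]] //.
  by rewrite setUC.
- move=> x y a; have := ns_indep a; rewrite negb_and => /orP [hx|hy].
  + rewrite (F_single hx) sumset1l -(F_single hx) (F_card x) (negbTE hx).
    by rewrite F_card; case: ns.
  + rewrite (F_single hy) sumset1r -(F_single hy) (F_card y) (negbTE hy).
    by rewrite F_card; case: ns.
Qed.
Definition i1 : 'I_n := Ordinal (isT : 1 < n).
Definition E1 : {set V} := [set inl ord_max; inr ord0].
Definition E2 : {set V} := [set inl i1; inr i1].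
Lemma mixed (i j : 'I_n) : uw_adj i j -> nat_of_ord i != 0 -> nat_of_ord j < 2 ->
  [set inl i; inr j] \in [set E1; E2].
Proof.
rewrite /uw_adj => a hi hj.
have hm : (i.+1 %% n = if i.+1 == n then 0 else i.+1)%N.
  case: eqP => [->|ne]; first by rewrite modnn.
  by rewrite modn_small //; have := ltn_ord i; lia.
rewrite hm in a; have hl := ltn_ord i.
have [[e1 e2]|[e1 e2]] : (nat_of_ord j = 0 /\ nat_of_ord i = m.+2) \/ (nat_of_ord j = 1 /\ nat_of_ord i = 1).
  by move: a; case: (@eqP _ i.+1 n); lia.
- have -> : i = ord_max by apply: val_inj.
  have -> : j = ord0 by apply: val_inj.
  by rewrite !inE eqxx.
- have -> : i = i1 by apply: val_inj.
  have -> : j = i1 by apply: val_inj.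
  by rewrite !inE eqxx orbT.
Qed.
Lemma nsl (i : 'I_n) : ~~ ns (inl i) -> nat_of_ord i != 0.
Proof. rewrite /ns /=; lia. Qed.
Lemma nsr (j : 'I_n) : ~~ ns (inr j) -> nat_of_ord j < 2.
Proof. rewrite /ns /=; lia. Qed.
Lemma upper : #|monoset adj F| <= 'C(m.+2, 2) + 2.
Proof.
set T0 := inl @: [set~ ord0] : {set V}.
set D := [set B : {set V} | B \subset T0 & #|B| == 2].
have sub : monoset adj F \subset D :|: [set E1; E2].
  apply/subsetP => e /(mono_inv F_weak) [x [y [-> a cx cy]]].
  have nx : ~~ ns x by move: cx; rewrite F_card; case: ns.
  have ny : ~~ ns y by move: cy; rewrite F_card; case: ns.
  clear cx cy; move: a nx ny; case: x => i; case: y => j //= a nx ny.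
  + rewrite inE; apply/orP; left; rewrite inE cards2 a andbT.
    rewrite subUset !sub1set; apply/andP; split; apply: imset_f; rewrite !inE;
      apply/eqP => /(congr1 val) /= /eqP; by [rewrite (negbTE (nsl nx)) | rewrite (negbTE (nsl ny))].
  + by rewrite inE; apply/orP; right; apply: mixed => //; [exact: nsl | exact: nsr].
  + by rewrite setUC inE; apply/orP; right; apply: mixed => //; [exact: nsl | exact: nsr].
have cT0 : #|T0| = m.+2 by rewrite card_imset; [rewrite cardsC1 card_ord | exact: inl_inj].
apply: leq_trans (subset_leq_card sub) _.
rewrite cardsU cards_draws cT0; apply: leq_trans (leq_subr _ _) _.
by rewrite leq_add2l cards2 ltnS leq_b1.
Qed.

End Constr.
Lemma arith m : ((m.+3 ^ 2 - 3 * m.+3 + 6) %/ 2)%N = ('C(m.+2, 2) + 2)%N.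
Proof. rewrite bin2 -divn2 /= -mulnn. nia. Qed.

Local Close Scope fset_scope.

Theorem theorem2p3 (n : nat) (hn : 3 <= n) :
  sparing_number_is (@complete_sun_adj n) ((n ^ 2 - 3 * n + 6) %/ 2).
Proof.
case: n hn => [|[|[|m]]] // _.
rewrite arith.
have me : forall f, mono_edges (@complete_sun_adj m.+3) f = #|monoset (@complete_sun_adj m.+3) f| by [].
split.
- exists (F (m:=m)); split; first exact: F_weak.
  by apply/eqP; rewrite me eqn_leq upper lower //; exact: F_weak.
- by move=> f hf; rewrite me; exact: lower.
Qed.
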